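(* Let $T$ be a finite rooted tree in which every inner node has at least two children, with node set $V$ and leaf set $L$. There exists a partition of $V\setminus L$ into four (possibly empty) sets each of which is thin.
   Context: A set $X\subseteq V\setminus L$ of inner nodes is thin if for every $x\in X$ other than the root, the parent of $x$ does not belong to $X$, and $x$ has at least one sibling (possibly a leaf) that does not belong to $X$. *)

(* Defs.v *)
From mathcomp Require Import all_boot.
Set Implicit Arguments. Unset Strict Implicit. Unset Printing Implicit Defensive.

(* A finite rooted tree on the node type V (a finType), given by its root r
   and a parent function; by convention parent r = r. *)
Definition rooted_tree (V : finType) (r : V) (parent : V -> V) : Prop :=
  parent r = r /\ forall x : V, exists n : nat, iter n parent x = r.

Definition children (V : finType) (r : V) (parent : V -> V) (x : V) : {set V} :=
  [set y | (y != r) && (parent y == x)].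

Definition inner_nodes (V : finType) (r : V) (parent : V -> V) : {set V} :=
  [set x | children r parent x != set0].

Definition full_branching (V : finType) (r : V) (parent : V -> V) : Prop :=
  forall x : V, x \in inner_nodes r parent -> 1 < #|children r parent x|.

Definition thin (V : finType) (r : V) (parent : V -> V) (X : {set V}) : Prop :=
  X \subset inner_nodes r parent /\
  forall x : V, x \in X -> x != r ->
    parent x \notin X /\
    exists y : V, [/\ y \in children r parent (parent x), y != x & y \notin X].

(* Main.v *)
Require Import Defs.
From mathcomp Require Import all_boot.

Theorem lemma3p9 (V : finType) (r : V) (parent : V -> V) :
  rooted_tree r parent ->
  full_branching r parent ->
  exists A : 'I_4 -> {set V},
    [/\ (forall i j : 'I_4, i != j -> [disjoint A i & A j]),
        \bigcup_(i < 4) A i = inner_nodes r parent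
      & forall i : 'I_4, thin r parent (A i)].
Proof.
move=> [pr Hex0] Hfb.
have Hex x : exists n, iter n parent x == r by case: (Hex0 x) => n /eqP; exists n.
pose d x := ex_minn (Hex x).
have dP x : x != r -> d x = (d (parent x)).+1.
  move=> xr; rewrite /d.
  case: ex_minnP => n /eqP Hn Hmin.
  case: ex_minnP => m /eqP Hm Hmin'.
  have n0 : n != 0 by apply: contraNneq xr => n0; rewrite -Hn n0.
  apply/eqP; rewrite eqn_leq; apply/andP; split.
    by apply: Hmin; rewrite iterSr Hm.
  case: n n0 Hn Hmin => // n _ Hn _.
  by apply: Hmin'; rewrite -iterSr Hn.
pose firstc p := odflt p [pick y in children r parent p].
pose b x := (x != r) && (firstc (parent x) == x).
pose key x := (odd (d x) + 2 * b x)%N.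
have key4 x : (key x < 4)%N by rewrite /key; case: (odd _); case: (b x).
exists (fun i : 'I_4 => [set x in inner_nodes r parent | key x == nat_of_ord i]); split.
- move=> i j ij; rewrite -setI_eq0; apply/eqP/setP => x; rewrite !inE.
  case: (children r parent x != set0) => //=.
  case: (key x =P i) => // ki; case: (key x =P j) => // kj.
  by move: ij; rewrite -(inj_eq val_inj) /= -ki -kj eqxx.
- apply/setP => x; apply/bigcupP/idP.
    by case=> i _; rewrite inE => /andP[].
  by move=> xi; exists (Ordinal (key4 x)) => //; rewrite inE xi /=.
- move=> i; split.
    by apply/subsetP => x; rewrite inE => /andP[].
  move=> x; rewrite inE => /andP[xin /eqP kx] xr; split.
    rewrite inE negb_and; apply/orP; right; rewrite -kx /key (dP x xr) /=.
    by case: (odd (d (parent x))); case: (b x); case: (b (parent x)).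
  have xc : x \in children r parent (parent x) by rewrite inE xr eqxx.
  have bne y : y \in children r parent (parent x) -> b y != b x -> y \notin
      [set x in inner_nodes r parent | key x == nat_of_ord i].
    move=> yc byx; rewrite inE negb_and; apply/orP; right.
    move: yc; rewrite inE => /andP[yr /eqP py].
    have dyx : d y = d x by rewrite (dP y yr) (dP x xr) py.
    rewrite -kx /key dyx.
    by move: byx; case: (b y); case: (b x); case: (odd _).
  case bx: (b x).
    move: (Hfb (parent x)); rewrite inE.
    have ne : children r parent (parent x) != set0 by apply/set0Pn; exists x.
    move=> /(_ ne) /card_gt1P [y [z [yc zc yz]]].
    have [y' [y'c y'x]] : exists y', y' \in children r parent (parent x) /\ y' != x.
      case: (y =P x) => [yx|/eqP yx]; last by exists y.
      by exists z; split => //; rewrite -yx eq_sym.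
    exists y'; split => //.
    apply: bne => //; rewrite bx.
    apply/negP => /eqP /andP[_ /eqP]; rewrite /firstc.
    move: y'c; rewrite inE => /andP[_ /eqP ->].
    move: bx; rewrite /b xr /= /firstc => /eqP ->.
    by move=> E; move: y'x; rewrite E eqxx.
  have bx0 := bx.
  rewrite /b xr /= /firstc in bx.
  case E: [pick y in children r parent (parent x)] bx => [z|]; last first.
    by move: E; case: pickP => [//|/(_ x)]; rewrite xc.
  move=> /= zx.
  have : z \in children r parent (parent x).
    by move: E; case: pickP => // w wc [<-].
  rewrite inE => /andP[zr /eqP pz].
  exists z; split; first by rewrite inE zr pz eqxx.
    by rewrite zx.
  apply: bne; first by rewrite inE zr pz eqxx.
  by rewrite bx0 /b zr /firstc pz E /= eqxx.
Qed.
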